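(* Let $\alpha$ be irrational whose continued fraction partial quotients are bounded in average. Then the Sós permutations $\beta_\alpha$ of $[n]$ satisfy $D(\beta_\alpha)=O(\log n)$ as $n\to\infty$ (implicit constant depending on $\alpha$).
   Context: $[n]=\{1,\dots,n\}$, identified with $\mathbb{Z}_n$; $\{x\}$ is the fractional part of $x$. For irrational $\alpha$, $\beta_\alpha$ is the permutation of $[n]$ with $\beta_\alpha(t)=|\{s\in[n]:\{\alpha s\}\le\{\alpha t\}\}|$. If $\alpha=[a_0;a_1,a_2,\dots]$, its partial quotients are bounded in average if there is $B$ with $a_1+\dots+a_m\le Bm$ for all $m\ge1$. An interval of $\mathbb{Z}_n$ is any subset that is the image of an interval of consecutive integers under the projection $\mathbb{Z}\to\mathbb{Z}_n$ (wrap-around allowed). For $S,T\subseteq\mathbb{Z}_n$, $D_T(S)=\bigl|\,|S\cap T|-|S||T|/n\,\bigr|$, and $D(\sigma)=\max_{I,J}D_J(\sigma(I))$ over all intervals $I,J$. *)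

(* Defs.v *)
From Stdlib Require Import Reals List Arith Bool.
Import ListNotations.
Open Scope R_scope.

(** Fractional part {x} = x - floor x  (Stdlib: frac_part x = x - IZR (Int_part x),
    and Int_part is the floor). *)
Definition frac (x : R) : R := frac_part x.

Definition irrational (x : R) : Prop :=
  forall p q : Z, q <> 0%Z -> x <> IZR p / IZR q.

(** Complete quotients of the continued fraction: x_0 = alpha,
    x_{k+1} = 1 / {x_k}; partial quotients a_k = floor x_k,
    so alpha = [a_0; a_1, a_2, ...]. *)
Fixpoint cf_rem (alpha : R) (k : nat) : R :=
  match k with
  | O => alpha
  | S k' => / frac (cf_rem alpha k')
  end.

Definition partial_quotient (alpha : R) (k : nat) : Z := Int_part (cf_rem alpha k).

Definition pq_bounded_in_average (alpha : R) : Prop :=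
  exists B : R, forall m : nat, (1 <= m)%nat ->
    fold_right Rplus 0 (map (fun k => IZR (partial_quotient alpha k)) (seq 1 m))
      <= B * INR m.

Definition cardn (n : nat) (P : nat -> bool) : nat := length (filter P (seq 1 n)).

Definition sos_perm (alpha : R) (n : nat) (t : nat) : nat :=
  cardn n (fun s => if Rle_dec (frac (alpha * INR s)) (frac (alpha * INR t))
                    then true else false).

(** Intervals of Z_n, viewed as subsets of [n] (t in [n] identified with t mod n):
    the image of the integer interval {a, a+1, ..., a+l-1} under Z -> Z_n.
    Since residues only matter, starting points a may be taken in nat. *)
Definition in_interval (n a l : nat) (t : nat) : bool :=
  existsb (fun i => Nat.eqb ((a + i) mod n) (t mod n)) (seq 0 l).

Definition in_image (n : nat) (sigma : nat -> nat) (a l : nat) (t : nat) : bool :=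
  existsb (fun s => in_interval n a l s && Nat.eqb (sigma s) t) (seq 1 n).

Definition discr (n : nat) (S T : nat -> bool) : R :=
  Rabs (INR (cardn n (fun t => S t && T t))
        - INR (cardn n S) * INR (cardn n T) / INR n).

(** D(sigma) <= c  iff  D_J(sigma(I)) <= c for all intervals I, J
    (D(sigma) is the maximum of these finitely many values). *)
Definition disc_le (n : nat) (sigma : nat -> nat) (c : R) : Prop :=
  forall a l b m : nat,
    discr n (in_image n sigma a l) (in_interval n b m) <= c.

(* Main.v *)
Require Import Defs.
From Stdlib Require Import Reals List Arith ZArith Lia Lra Permutation.
Import ListNotations.
Open Scope R_scope.

Lemma fl_unique x z : IZR z <= x < IZR z + 1 -> Int_part x = z.
Proof.
  intros [H1 H2]. unfold Int_part.
  assert (z + 1 = up x)%Z.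
  { apply tech_up; rewrite plus_IZR; lra. }
  lia.
Qed.

Lemma fl_spec x : IZR (Int_part x) <= x < IZR (Int_part x) + 1.
Proof. destruct (base_Int_part x); lra. Qed.

Lemma fl_add_int x z : Int_part (x + IZR z) = (Int_part x + z)%Z.
Proof. apply fl_unique. rewrite plus_IZR. pose proof (fl_spec x). lra. Qed.

Lemma fl_mono x y : x <= y -> (Int_part x <= Int_part y)%Z.
Proof.
  intros H. destruct (Z_le_gt_dec (Int_part x) (Int_part y)) as [|Hg]; auto.
  exfalso. assert (Int_part y + 1 <= Int_part x)%Z by lia.
  apply IZR_le in H0. rewrite plus_IZR in H0.
  pose proof (fl_spec x). pose proof (fl_spec y). lra.
Qed.

Lemma fl_int z : Int_part (IZR z) = z.
Proof. apply fl_unique. lra. Qed.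

Definition sumR {A} (l : list A) (f : A -> R) : R :=
  fold_right (fun x acc => f x + acc) 0 l.

Lemma sumR_app {A} (l1 l2 : list A) f : sumR (l1 ++ l2) f = sumR l1 f + sumR l2 f.
Proof. induction l1; simpl; [lra|]. rewrite IHl1. lra. Qed.

Lemma sumR_ext {A} (l : list A) f g : (forall x, In x l -> f x = g x) -> sumR l f = sumR l g.
Proof. induction l; simpl; intros H; auto. rewrite H, IHl; auto. Qed.

Lemma sumR_plus {A} (l : list A) f g : sumR l (fun x => f x + g x) = sumR l f + sumR l g.
Proof. induction l; simpl; [lra|]. rewrite IHl. lra. Qed.

Lemma sumR_minus {A} (l : list A) f g : sumR l (fun x => f x - g x) = sumR l f - sumR l g.
Proof. induction l; simpl; [lra|]. rewrite IHl. lra. Qed.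

Lemma sumR_scal {A} (l : list A) f c : sumR l (fun x => c * f x) = c * sumR l f.
Proof. induction l; simpl; [lra|]. rewrite IHl. lra. Qed.

Lemma sumR_const {A} (l : list A) c : sumR l (fun _ => c) = INR (length l) * c.
Proof. induction l; simpl length; [simpl; lra|]. rewrite S_INR. simpl. rewrite IHl. lra. Qed.

Lemma sumR_le {A} (l : list A) f g : (forall x, In x l -> f x <= g x) -> sumR l f <= sumR l g.
Proof. induction l; simpl; intros H; [lra|]. pose proof (H a (or_introl eq_refl)).
  assert (sumR l f <= sumR l g) by auto. lra. Qed.

Lemma sumR_map {A B} (l : list A) (g : A -> B) f : sumR (map g l) f = sumR l (fun x => f (g x)).
Proof. induction l; simpl; auto. rewrite IHl; auto. Qed.

Lemma sumR_perm {A} (l l' : list A) f : Permutation l l' -> sumR l f = sumR l' f.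
Proof. induction 1; simpl. - lra. - rewrite IHPermutation; lra. - lra. - congruence. Qed.

Definition ind (b : bool) : R := if b then 1 else 0.

Lemma cardn_sum n P : INR (cardn n P) = sumR (seq 1 n) (fun t => ind (P t)).
Proof.
  unfold cardn. generalize (seq 1 n). induction l; simpl; auto.
  destruct (P a); cbn [length]; [rewrite S_INR|]; rewrite IHl; simpl ind; lra.
Qed.

Lemma seq_shift_add L1 L2 : seq L1 L2 = map (Nat.add L1) (seq 0 L2).
Proof.
  revert L1. induction L2; intros; simpl; auto. f_equal; [lia|].
  rewrite IHL2, <- seq_shift, map_map. apply map_ext. intros; lia.
Qed.


Definition aq (al : R) (k : nat) : Z := partial_quotient al k.
Definition fr (al : R) (k : nat) : R := frac (cf_rem al k).

Fixpoint Qd (al : R) (i : nat) : Z :=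
  match i with
  | O => 0%Z
  | S O => 1%Z
  | S ((S j) as k) => (aq al k * Qd al k + Qd al j)%Z
  end.

Fixpoint Pd (al : R) (i : nat) : Z :=
  match i with
  | O => 1%Z
  | S O => aq al 0
  | S ((S j) as k) => (aq al k * Pd al k + Pd al j)%Z
  end.

Fixpoint Th (al : R) (i : nat) : R :=
  match i with
  | O => 1
  | S j => Th al j * fr al j
  end.

Lemma fr_eq al k : fr al k = cf_rem al k - IZR (aq al k).
Proof. reflexivity. Qed.

Lemma fr_bounds al k : 0 <= fr al k < 1.
Proof. rewrite fr_eq. unfold aq, partial_quotient. pose proof (fl_spec (cf_rem al k)). lra. Qed.

Lemma cf_S al k : cf_rem al (S k) = / fr al k.
Proof. reflexivity. Qed.

Lemma aq_ge1 al j : fr al j <> 0 -> (1 <= aq al (S j))%Z.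
Proof.
  intros H. pose proof (fr_bounds al j).
  assert (Hx : 1 < cf_rem al (S j)).
  { rewrite cf_S. rewrite <- Rinv_1. apply Rinv_lt_contravar; lra. }
  unfold aq, partial_quotient. pose proof (fl_spec (cf_rem al (S j))).
  assert (0 < IZR (Int_part (cf_rem al (S j)))) by lra.
  apply lt_IZR in H2. lia.
Qed.

Definition Eid (al : R) (i : nat) : Prop :=
  IZR (Qd al i) * al - IZR (Pd al i) = (-1) ^ (S i) * Th al i.

Lemma ident al : forall i, (forall j, (j < i)%nat -> fr al j <> 0) -> Eid al i /\ Eid al (S i).
Proof.
  induction i; intros H.
  - unfold Eid; simpl. split; [lra|]. unfold fr, frac, frac_part, aq, partial_quotient. simpl. lra.
  - destruct IHi as [H1 H2]. { intros; apply H; lia. }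
    split; auto. unfold Eid in *.
    change (Qd al (S (S i))) with (aq al (S i) * Qd al (S i) + Qd al i)%Z.
    change (Pd al (S (S i))) with (aq al (S i) * Pd al (S i) + Pd al i)%Z.
    change (Th al (S (S i))) with (Th al (S i) * fr al (S i)).
    change (Th al (S i)) with (Th al i * fr al i) in *.
    rewrite !plus_IZR, !mult_IZR.
    assert (Hf : fr al i <> 0) by (apply H; lia).
    rewrite (fr_eq al (S i)), cf_S.
    replace ((-1) ^ S (S (S i))) with ((-1) ^ S i) by (simpl; ring).
    replace ((-1) ^ S (S i)) with (- (-1) ^ S i) in H2 by (simpl; ring).
    set (u := (-1) ^ S i) in *.
    set (A := IZR (aq al (S i))).
    transitivity (A * (IZR (Qd al (S i)) * al - IZR (Pd al (S i))) + (IZR (Qd al i) * al - IZR (Pd al i))); [ring|].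
    rewrite H1, H2. field. auto.
Qed.

Lemma Qpos al : forall i, (forall j, (j < i)%nat -> fr al j <> 0) ->
  (0 <= Qd al i)%Z /\ (Qd al i <= Qd al (S i))%Z /\ (1 <= Qd al (S i))%Z.
Proof.
  induction i; intros H.
  - simpl. lia.
  - destruct IHi as [H1 [H2 H3]]. { intros; apply H; lia. }
    assert (Ha : (1 <= aq al (S i))%Z) by (apply aq_ge1, H; lia).
    change (Qd al (S (S i))) with (aq al (S i) * Qd al (S i) + Qd al i)%Z. nia.
Qed.

Lemma all_fr_nz al : irrational al -> forall i, fr al i <> 0.
Proof.
  intros Hirr i. induction i as [i IH] using (well_founded_induction lt_wf).
  intros Hz. destruct (ident al i IH) as [_ HE]. destruct (Qpos al i IH) as [_ [_ Hq]].
  unfold Eid in HE. simpl Th in HE. rewrite Hz in HE.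
  apply (Hirr (Pd al (S i)) (Qd al (S i))). lia.
  assert (IZR (Qd al (S i)) <> 0) by (apply not_0_IZR; lia).
  field_simplify_eq; auto. lra.
Qed.


Lemma Th_pos al (H : forall j, fr al j <> 0) i : 0 < Th al i.
Proof.
  induction i; simpl; [lra|]. pose proof (fr_bounds al i). pose proof (H i).
  apply Rmult_lt_0_compat; auto. lra.
Qed.

Lemma Th_rec al (H : forall j, fr al j <> 0) i :
  Th al (S (S i)) = Th al i - IZR (aq al (S i)) * Th al (S i).
Proof.
  change (Th al (S (S i))) with (Th al (S i) * fr al (S i)).
  change (Th al (S i)) with (Th al i * fr al i).
  rewrite (fr_eq al (S i)), cf_S. field. apply H.
Qed.

Lemma Wid al (H : forall j, fr al j <> 0) i :
  IZR (Qd al (S i)) * Th al i + IZR (Qd al i) * Th al (S i) = 1.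
Proof.
  induction i.
  - simpl. lra.
  - rewrite Th_rec by auto.
    change (Qd al (S (S i))) with (aq al (S i) * Qd al (S i) + Qd al i)%Z.
    rewrite plus_IZR, mult_IZR. rewrite <- IHi. ring.
Qed.

Lemma Qmono al (H : forall j, fr al j <> 0) i :
  (0 <= Qd al i)%Z /\ (Qd al i <= Qd al (S i))%Z /\ (1 <= Qd al (S i))%Z.
Proof. apply Qpos. intros; auto. Qed.

Lemma qth_le1 al (H : forall j, fr al j <> 0) i :
  IZR (Qd al (S i)) * Th al (S i) <= 1.
Proof.
  pose proof (Wid al H (S i)). destruct (Qmono al H (S i)) as [H1 [H2 H3]].
  destruct (Qmono al H i) as [H4 [H5 H6]].
  apply IZR_le in H2. apply IZR_le in H4. apply IZR_le in H1.
  pose proof (Th_pos al H (S i)). pose proof (Th_pos al H (S (S i))).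
  assert (IZR (Qd al (S i)) * Th al (S (S i)) >= 0) by (apply Rle_ge, Rmult_le_pos; lra).
  assert (IZR (Qd al (S i)) * Th al (S i) <= IZR (Qd al (S (S i))) * Th al (S i))
    by (apply Rmult_le_compat_r; lra).
  lra.
Qed.

Lemma det al i : (Pd al (S i) * Qd al i - Pd al i * Qd al (S i) = 1 \/
                  Pd al (S i) * Qd al i - Pd al i * Qd al (S i) = -1)%Z.
Proof.
  induction i.
  - simpl. lia.
  - change (Qd al (S (S i))) with (aq al (S i) * Qd al (S i) + Qd al i)%Z.
    change (Pd al (S (S i))) with (aq al (S i) * Pd al (S i) + Pd al i)%Z.
    assert ((aq al (S i) * Pd al (S i) + Pd al i) * Qd al (S i) -
            Pd al (S i) * (aq al (S i) * Qd al (S i) + Qd al i) =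
            - (Pd al (S i) * Qd al i - Pd al i * Qd al (S i)))%Z by ring.
    lia.
Qed.

Lemma coprime_blk al i : forall j z : Z, (0 < j < Qd al (S i))%Z ->
  (j * Pd al (S i))%Z <> (z * Qd al (S i))%Z.
Proof.
  intros j z Hj Heq. destruct (det al i) as [Hd|Hd].
  - assert (Qd al (S i) * (z * Qd al i - j * Pd al i) = j)%Z.
    { transitivity (j * (Pd al (S i) * Qd al i - Pd al i * Qd al (S i)))%Z; [|rewrite Hd; ring].
      transitivity ((z * Qd al (S i)) * Qd al i - j * Pd al i * Qd al (S i))%Z; [ring|]. rewrite <- Heq. ring. }
    match goal with H : (_ * ?w = j)%Z |- _ => destruct (Z_le_gt_dec w 0); nia end.
  - assert (Qd al (S i) * (j * Pd al i - z * Qd al i) = j)%Z.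
    { transitivity (- j * (Pd al (S i) * Qd al i - Pd al i * Qd al (S i)))%Z; [|rewrite Hd; ring].
      transitivity (j * Pd al i * Qd al (S i) - (z * Qd al (S i)) * Qd al i)%Z; [ring|]. rewrite <- Heq. ring. }
    match goal with H : (_ * ?w = j)%Z |- _ => destruct (Z_le_gt_dec w 0); nia end.
Qed.

Lemma E_all al (H : forall j, fr al j <> 0) i : Eid al i.
Proof. apply (ident al i). intros; auto. Qed.

Lemma telesc (h : nat -> R) q : sumR (seq 0 q) (fun r => h (S r) - h r) = h q - h O.
Proof.
  induction q; [simpl; lra|]. rewrite seq_S, sumR_app, IHq. simpl. lra.
Qed.

Lemma sumdiv q (Hq : (1 <= q)%nat) : forall m : Z,
  sumR (seq 0 q) (fun r => IZR ((m + Z.of_nat r) / Z.of_nat q)) = IZR m.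
Proof.
  assert (Hq' : (0 < Z.of_nat q)%Z) by lia.
  assert (step : forall m, sumR (seq 0 q) (fun r => IZR ((Z.succ m + Z.of_nat r) / Z.of_nat q))
     = sumR (seq 0 q) (fun r => IZR ((m + Z.of_nat r) / Z.of_nat q)) + 1).
  { intros m.
    assert (sumR (seq 0 q) (fun r => IZR ((Z.succ m + Z.of_nat r) / Z.of_nat q))
     - sumR (seq 0 q) (fun r => IZR ((m + Z.of_nat r) / Z.of_nat q)) = 1); [|lra].
    rewrite <- sumR_minus.
    set (h := fun k : nat => IZR ((m + Z.of_nat k) / Z.of_nat q)).
    transitivity (sumR (seq 0 q) (fun r => h (S r) - h r)).
    { apply sumR_ext. intros r _. unfold h. rewrite Nat2Z.inj_succ. do 3 f_equal. lia. }
    rewrite telesc. unfold h. rewrite <- minus_IZR. simpl Z.of_nat at 2.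
    rewrite Z.add_0_r.
    replace (m + Z.of_nat q)%Z with (m + 1 * Z.of_nat q)%Z by ring.
    rewrite Z_div_plus_full by lia. f_equal. ring. }
  intros m. induction m using Z.peano_ind.
  - rewrite (sumR_ext _ _ (fun _ => 0)). 
    + rewrite sumR_const. lra.
    + intros r Hr. apply in_seq in Hr. rewrite Z.div_small; [reflexivity|lia].
  - rewrite step, IHm. rewrite <- Z.add_1_r, plus_IZR. lra.
  - pose proof (step (Z.pred m)). rewrite Z.succ_pred in H. rewrite IHm in H.
    replace (IZR (Z.pred m)) with (IZR m - 1) by (rewrite <- Z.sub_1_r, minus_IZR; ring). lra.
Qed.

Lemma hermite q x : (1 <= q)%nat ->
  sumR (seq 0 q) (fun r => IZR (Int_part (x + INR r / INR q))) = IZR (Int_part (INR q * x)).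
Proof.
  intros Hq. set (m := Int_part (INR q * x)).
  rewrite <- (sumdiv q Hq m). apply sumR_ext. intros r _. f_equal.
  apply fl_unique.
  assert (Hq0 : 0 < INR q) by (apply lt_0_INR; lia).
  set (d := ((m + Z.of_nat r) / Z.of_nat q)%Z).
  pose proof (Z_div_mod_eq_full (m + Z.of_nat r) (Z.of_nat q)).
  pose proof (Z.mod_pos_bound (m + Z.of_nat r) (Z.of_nat q)).
  fold d in H. set (e := ((m + Z.of_nat r) mod Z.of_nat q)%Z) in *.
  assert (H1 : (Z.of_nat q * d <= m + Z.of_nat r)%Z) by lia.
  assert (H2 : (m + Z.of_nat r + 1 <= Z.of_nat q * d + Z.of_nat q)%Z) by lia.
  apply IZR_le in H1. apply IZR_le in H2. rewrite ?plus_IZR, ?mult_IZR in H1. rewrite ?plus_IZR, ?mult_IZR in H2.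
  rewrite <- !INR_IZR_INZ in H1, H2.
  pose proof (fl_spec (INR q * x)). fold m in H3.
  assert (x + INR r / INR q = (INR q * x + INR r) / INR q) by (field; lra).
  rewrite H4. split.
  - apply Rmult_le_reg_l with (INR q); auto. field_simplify; lra.
  - apply Rmult_lt_reg_l with (INR q); auto. field_simplify; lra.
Qed.


Definition Phi (al c : R) (L : nat) : R :=
  sumR (seq 0 L) (fun j => IZR (Int_part (c + INR j * al))).

Definition PP (al : R) (L : nat) (D : R) : Prop :=
  exists K, forall c, Rabs (Phi al c L - INR L * c - K) <= D.

Lemma Phi_add al c L1 L2 : Phi al c (L1 + L2) = Phi al c L1 + Phi al (c + INR L1 * al) L2.
Proof.
  unfold Phi. rewrite seq_app, sumR_app. f_equal. simpl.
  rewrite seq_shift_add, sumR_map. apply sumR_ext. intros j _.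
  rewrite plus_INR. f_equal. f_equal. ring.
Qed.

Lemma PP_add al L1 L2 D1 D2 : PP al L1 D1 -> PP al L2 D2 -> PP al (L1 + L2) (D1 + D2).
Proof.
  intros [K1 H1] [K2 H2]. exists (K1 + K2 + INR L2 * INR L1 * al). intros c.
  rewrite Phi_add. specialize (H1 c). specialize (H2 (c + INR L1 * al)).
  rewrite plus_INR.
  replace (Phi al c L1 + Phi al (c + INR L1 * al) L2 - (INR L1 + INR L2) * c -
   (K1 + K2 + INR L2 * INR L1 * al)) with
   ((Phi al c L1 - INR L1 * c - K1) + (Phi al (c + INR L1 * al) L2 - INR L2 * (c + INR L1 * al) - K2)) by ring.
  eapply Rle_trans; [apply Rabs_triang|]. lra.
Qed.

Lemma PP_mono al L D D' : PP al L D -> D <= D' -> PP al L D'.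
Proof. intros [K H] Hd. exists K. intros c. specialize (H c). lra. Qed.

Lemma PP_0 al : PP al 0 0.
Proof. exists 0. intros c. unfold Phi. simpl. replace (0 - 0 * c - 0) with 0 by ring. rewrite Rabs_R0. lra. Qed.

Lemma PP_mul al q D b : PP al q D -> PP al (b * q) (INR b * D).
Proof.
  intros H. induction b.
  - simpl. replace (0 * D) with 0 by ring. apply PP_0.
  - simpl (S b * q)%nat. rewrite S_INR. replace ((INR b + 1) * D) with (D + INR b * D) by ring.
    apply PP_add; auto.
Qed.

Lemma perm_res q p : (1 <= q)%nat ->
  (forall j z : Z, (0 < j < Z.of_nat q)%Z -> (j * p)%Z <> (z * Z.of_nat q)%Z) ->
  Permutation (map (fun j => ((Z.of_nat j * p) mod Z.of_nat q)%Z) (seq 0 q)) (map Z.of_nat (seq 0 q)).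
Proof.
  intros Hq Hc. apply NoDup_Permutation_bis.
  - apply NoDup_map_NoDup_ForallPairs; [|apply seq_NoDup].
    intros x y Hx Hy Hxy. apply in_seq in Hx. apply in_seq in Hy.
    pose proof (Z_div_mod_eq_full (Z.of_nat x * p) (Z.of_nat q)).
    pose proof (Z_div_mod_eq_full (Z.of_nat y * p) (Z.of_nat q)).
    set (dx := (Z.of_nat x * p / Z.of_nat q)%Z) in *.
    set (dy := (Z.of_nat y * p / Z.of_nat q)%Z) in *.
    rewrite Hxy in H.
    destruct (lt_eq_lt_dec x y) as [[Hlt|Heq]|Hgt]; auto; exfalso.
    + apply (Hc (Z.of_nat y - Z.of_nat x)%Z (dy - dx)%Z); [lia|]. nia.
    + apply (Hc (Z.of_nat x - Z.of_nat y)%Z (dx - dy)%Z); [lia|]. nia.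
  - rewrite !length_map. lia.
  - intros z Hz. apply in_map_iff in Hz. destruct Hz as [j [Hj _]].
    pose proof (Z.mod_pos_bound (Z.of_nat j * p) (Z.of_nat q)). 
    apply in_map_iff. exists (Z.to_nat z). split; [lia|]. apply in_seq. lia.
Qed.

Lemma block al q p th sg : (1 <= q)%nat -> 0 <= th -> INR q * th <= 1 -> (sg = 1 \/ sg = -1) ->
  INR q * al - IZR p = sg * th ->
  (forall j z : Z, (0 < j < Z.of_nat q)%Z -> (j * p)%Z <> (z * Z.of_nat q)%Z) ->
  PP al q 2.
Proof.
  intros Hq Hth Hqth Hsg Hal Hc.
  assert (Hq0 : 0 < INR q) by (apply lt_0_INR; lia).
  set (Zq := Z.of_nat q).
  exists (sumR (seq 0 q) (fun j => IZR ((Z.of_nat j * p) / Zq))).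
  intros c.
  set (rr := fun j : nat => ((Z.of_nat j * p) mod Zq)%Z).
  set (F := fun (d : R) (z : Z) => IZR (Int_part (c + (IZR z + d) / INR q))).
  assert (Hsum : forall d, sumR (seq 0 q) (fun j => F d (rr j)) = IZR (Int_part (INR q * c + d))).
  { intros d. rewrite <- (sumR_map _ rr (F d)).
    rewrite (sumR_perm _ _ _ (perm_res q p Hq Hc)). rewrite sumR_map.
    replace (INR q * c + d) with (INR q * (c + d / INR q)) by (field; lra).
    rewrite <- hermite by auto. apply sumR_ext. intros r _. unfold F.
    rewrite <- INR_IZR_INZ. f_equal. f_equal. field. lra. }
  assert (Hterm : forall j, In j (seq 0 q) ->
     F (-1) (rr j) <= IZR (Int_part (c + INR j * al)) - IZR ((Z.of_nat j * p) / Zq) <= F 1 (rr j)).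
  { intros j Hj. apply in_seq in Hj.
    pose proof (Z_div_mod_eq_full (Z.of_nat j * p) Zq).
    set (dj := ((Z.of_nat j * p) / Zq)%Z) in *. fold (rr j) in H.
    assert (Hja : c + INR j * al = (c + (IZR (rr j) + sg * INR j * th) / INR q) + IZR dj).
    { apply Rmult_eq_reg_l with (INR q); [|lra].
      assert (HH : IZR (Z.of_nat j * p) = IZR (Zq * dj + rr j)) by (f_equal; exact H).
      rewrite plus_IZR, !mult_IZR in HH. unfold Zq in HH. rewrite <- !INR_IZR_INZ in HH.
      field_simplify; [|lra]. 
      replace (INR q * INR j * al) with (INR j * (INR q * al)) by ring.
      replace (INR q * al) with (IZR p + sg * th) by lra. nra. }
    rewrite Hja, fl_add_int, plus_IZR.
    assert (Hjth : INR j * th <= 1).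
    { assert (INR j <= INR q) by (apply le_INR; lia). nra. }
    assert (Hj0 : 0 <= INR j) by apply pos_INR.
    unfold F. split.
    - assert (IZR (Int_part (c + (IZR (rr j) + -1) / INR q)) <= IZR (Int_part (c + (IZR (rr j) + sg * INR j * th) / INR q))); [|lra].
      apply IZR_le, fl_mono. apply Rplus_le_compat_l. unfold Rdiv. apply Rmult_le_compat_r.
      + left. apply Rinv_0_lt_compat; lra.
      + destruct Hsg; subst; nra.
    - assert (IZR (Int_part (c + (IZR (rr j) + sg * INR j * th) / INR q)) <= IZR (Int_part (c + (IZR (rr j) + 1) / INR q))); [|lra].
      apply IZR_le, fl_mono. apply Rplus_le_compat_l. unfold Rdiv. apply Rmult_le_compat_r.
      + left. apply Rinv_0_lt_compat; lra.
      + destruct Hsg; subst; nra. }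
  assert (Hlo := sumR_le _ _ _ (fun j Hj => proj1 (Hterm j Hj))).
  assert (Hhi := sumR_le _ _ _ (fun j Hj => proj2 (Hterm j Hj))).
  rewrite sumR_minus in Hlo, Hhi. rewrite Hsum in Hlo, Hhi.
  fold (Phi al c q) in Hlo, Hhi.
  rewrite (fl_add_int _ 1) in Hhi. 
  replace (INR q * c + -1) with (INR q * c + IZR (-1)) in Hlo by (simpl; ring).
  rewrite fl_add_int in Hlo. rewrite plus_IZR in Hlo, Hhi.
  pose proof (fl_spec (INR q * c)). apply Rabs_le. simpl IZR in *. lra.
Qed.


Lemma pow_m1 n : (-1) ^ n = 1 \/ (-1) ^ n = -1.
Proof. induction n; simpl; [auto|]. destruct IHn as [H|H]; rewrite H; [right|left]; ring. Qed.

Lemma blockQ al (H : forall j, fr al j <> 0) i : PP al (Z.to_nat (Qd al (S i))) 2.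
Proof.
  destruct (Qmono al H i) as [_ [_ Hq]].
  assert (HI : INR (Z.to_nat (Qd al (S i))) = IZR (Qd al (S i))).
  { rewrite INR_IZR_INZ. f_equal. lia. }
  apply (block al _ (Pd al (S i)) (Th al (S i)) ((-1) ^ S (S i))).
  - lia.
  - left. apply Th_pos; auto.
  - rewrite HI. apply qth_le1; auto.
  - apply pow_m1.
  - rewrite HI. apply (E_all al H (S i)).
  - intros j z Hj. rewrite Z2Nat.id in * by lia. apply coprime_blk. auto.
Qed.

Definition SA (al : R) (k : nat) : R :=
  fold_right Rplus 0 (map (fun k => IZR (partial_quotient al k)) (seq 1 k)).

Lemma fold_Rplus x l : fold_right Rplus x l = x + fold_right Rplus 0 l.
Proof. induction l; simpl; [lra|]. rewrite IHl. lra. Qed.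

Lemma SA_S al k : SA al (S k) = SA al k + IZR (aq al (S k)).
Proof.
  unfold SA. rewrite seq_S, map_app, fold_right_app. simpl.
  rewrite fold_Rplus. replace (1 + k)%nat with (S k) by lia. unfold aq. lra.
Qed.

Lemma ostr al (H : forall j, fr al j <> 0) : forall k L,
  (Z.of_nat L < Qd al (S k))%Z -> PP al L (2 * SA al k).
Proof.
  induction k; intros L HL.
  - simpl in HL. assert (L = 0%nat) by lia. subst. unfold SA. simpl.
    replace (2 * 0) with 0 by ring. apply PP_0.
  - destruct (Qmono al H (S k)) as [H1 [H2 H3]].
    destruct (Qmono al H k) as [H4 [H5 H6]].
    assert (Ha : (1 <= aq al (S k))%Z) by (apply aq_ge1; auto).
    set (qn := Z.to_nat (Qd al (S k))).
    assert (Hqn : Z.of_nat qn = Qd al (S k)) by (unfold qn; lia).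
    pose proof (Nat.div_mod_eq L qn).
    pose proof (Nat.mod_upper_bound L qn ltac:(lia)).
    set (b := (L / qn)%nat) in *. set (r := (L mod qn)%nat) in *.
    assert (Hb : (Z.of_nat b <= aq al (S k))%Z).
    { change (Qd al (S (S k))) with (aq al (S k) * Qd al (S k) + Qd al k)%Z in HL.
      assert (Z.of_nat L = Z.of_nat qn * Z.of_nat b + Z.of_nat r)%Z by lia.
      nia. }
    assert (HL' : L = (b * qn + r)%nat) by lia. rewrite HL'.
    eapply PP_mono. apply PP_add. apply PP_mul. apply blockQ; auto.
    apply IHk. lia.
    rewrite SA_S. rewrite INR_IZR_INZ. apply IZR_le in Hb. lra.
Qed.

Lemma Q_growth al (H : forall j, fr al j <> 0) : forall m,
  (Z.of_nat (2 ^ m) <= Qd al (S (2 * m)))%Z.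
Proof.
  induction m.
  - simpl. lia.
  - replace (S (2 * S m)) with (S (S (S (2 * m)))) by lia.
    change (Qd al (S (S (S (2 * m))))) with (aq al (S (S (2*m))) * Qd al (S (S (2 * m))) + Qd al (S (2*m)))%Z.
    destruct (Qmono al H (S (2 * m))) as [H1 [H2 H3]].
    assert (Ha : (1 <= aq al (S (S (2*m))))%Z) by (apply aq_ge1; auto).
    rewrite Nat.pow_succ_r', Nat2Z.inj_mul. nia.
Qed.

Lemma ind_fl w y (f : bool) : 0 <= y <= 1 -> (f = true <-> frac w < y) ->
  ind f = IZR (Int_part w) - IZR (Int_part (w - y)).
Proof.
  intros Hy Hf. unfold frac, frac_part in Hf. pose proof (fl_spec w).
  destruct f; unfold ind.
  - assert (Int_part (w - y) = Int_part w - 1)%Z.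
    { apply fl_unique. rewrite minus_IZR. assert (w - IZR (Int_part w) < y) by (apply Hf; auto). simpl; lra. }
    rewrite H0, minus_IZR. simpl. lra.
  - assert (Int_part (w - y) = Int_part w)%Z.
    { apply fl_unique. assert (~ (w - IZR (Int_part w) < y)) by (intro Hc; apply Hf in Hc; discriminate). lra. }
    rewrite H0. lra.
Qed.

Lemma count_PP al k D y (f : nat -> bool) : PP al k D -> 0 <= y <= 1 ->
  (forall s, f s = true <-> frac (al * INR s) < y) ->
  Rabs (sumR (seq 1 k) (fun s => ind (f s)) - INR k * y) <= 2 * D.
Proof.
  intros [K HK] Hy Hf.
  rewrite (sumR_ext _ _ (fun s => IZR (Int_part (al * INR s)) - IZR (Int_part (al * INR s - y)))).
  2:{ intros s _. apply ind_fl; auto. }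
  rewrite <- seq_shift, sumR_map, sumR_minus.
  replace (sumR (seq 0 k) (fun x => IZR (Int_part (al * INR (S x))))) with (Phi al al k).
  2:{ unfold Phi. apply sumR_ext. intros j _. rewrite S_INR. do 2 f_equal. ring. }
  replace (sumR (seq 0 k) (fun x => IZR (Int_part (al * INR (S x) - y)))) with (Phi al (al - y) k).
  2:{ unfold Phi. apply sumR_ext. intros j _. rewrite S_INR. do 2 f_equal. ring. }
  pose proof (HK al). pose proof (HK (al - y)).
  replace (Phi al al k - Phi al (al - y) k - INR k * y) with
    ((Phi al al k - INR k * al - K) - (Phi al (al - y) k - INR k * (al - y) - K)) by ring.
  eapply Rle_trans; [apply Rabs_triang|]. rewrite Rabs_Ropp. lra.
Qed.

Lemma kron al (H : forall j, fr al j <> 0) n k y (f : nat -> bool) :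
  (1 <= n)%nat -> (k <= n)%nat -> 0 <= y <= 1 ->
  (forall s, f s = true <-> frac (al * INR s) < y) ->
  Rabs (sumR (seq 1 k) (fun s => ind (f s)) - INR k * y) <= 4 * SA al (2 * S (Nat.log2 n)).
Proof.
  intros Hn Hk Hy Hf.
  replace (4 * SA al (2 * S (Nat.log2 n))) with (2 * (2 * SA al (2 * S (Nat.log2 n)))) by ring.
  apply (count_PP al); auto. apply ostr; auto.
  pose proof (Q_growth al H (S (Nat.log2 n))).
  pose proof (Nat.log2_spec n ltac:(lia)). lia.
Qed.


Lemma frac_bounds x : 0 <= frac x < 1.
Proof. unfold frac, frac_part. pose proof (fl_spec x). lra. Qed.

Lemma frac_inj al : irrational al -> forall s t : nat, s <> t ->
  frac (al * INR s) <> frac (al * INR t).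
Proof.
  intros Hirr s t Hst Heq. unfold frac, frac_part in Heq.
  apply (Hirr (Int_part (al * INR s) - Int_part (al * INR t))%Z (Z.of_nat s - Z.of_nat t)%Z); [lia|].
  assert (IZR (Z.of_nat s - Z.of_nat t)%Z <> 0) by (apply not_0_IZR; lia).
  rewrite !minus_IZR in *. rewrite <- !INR_IZR_INZ in *.
  field_simplify_eq; [|auto]. lra.
Qed.

Lemma filt_le {A} (P Q : A -> bool) l : (forall x, In x l -> P x = true -> Q x = true) ->
  (length (filter P l) <= length (filter Q l))%nat.
Proof.
  induction l; simpl; intros H; auto.
  destruct (P a) eqn:Ea.
  - rewrite (H a (or_introl eq_refl) Ea). simpl. apply le_n_S, IHl; auto.
  - destruct (Q a); simpl; [apply le_S|]; apply IHl; auto.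
Qed.

Lemma filt_lt {A} (P Q : A -> bool) l : (forall x, In x l -> P x = true -> Q x = true) ->
  (exists x, In x l /\ P x = false /\ Q x = true) ->
  (length (filter P l) < length (filter Q l))%nat.
Proof.
  induction l; simpl; intros H [x [Hx [Hp Hq]]]; [contradiction|].
  destruct Hx as [<-|Hx].
  - rewrite Hp, Hq. simpl. apply le_n_S, filt_le; auto.
  - assert (length (filter P l) < length (filter Q l))%nat by (apply IHl; eauto).
    destruct (P a) eqn:Ea.
    + rewrite (H a (or_introl eq_refl) Ea). simpl. lia.
    + destruct (Q a); simpl; lia.
Qed.

Lemma filt_len {A} (P : A -> bool) l : (length (filter P l) <= length l)%nat.
Proof. induction l; simpl; auto. destruct (P a); simpl; lia. Qed.

Lemma filt_pos {A} (P : A -> bool) l x : In x l -> P x = true -> (1 <= length (filter P l))%nat.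
Proof.
  induction l; simpl; intros Hx Hp; [contradiction|].
  destruct Hx as [<-|Hx]; [rewrite Hp; simpl; lia|].
  destruct (P a); simpl; [lia|]. apply IHl; auto.
Qed.

Lemma sig_range al n s : (1 <= s <= n)%nat -> (1 <= sos_perm al n s <= n)%nat.
Proof.
  intros Hs. unfold sos_perm, cardn. split.
  - apply (filt_pos _ _ s); [apply in_seq; lia|]. destruct Rle_dec; auto. lra.
  - eapply Nat.le_trans; [apply filt_len|]. rewrite length_seq. lia.
Qed.

Lemma sig_lt al n s t : (1 <= s <= n)%nat -> (1 <= t <= n)%nat ->
  frac (al * INR s) < frac (al * INR t) -> (sos_perm al n s < sos_perm al n t)%nat.
Proof.
  intros Hs Ht Hlt. unfold sos_perm, cardn. apply filt_lt.
  - intros x _. destruct Rle_dec; destruct Rle_dec; auto; lra.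
  - exists t. split; [apply in_seq; lia|]. destruct Rle_dec; [lra|]. destruct Rle_dec; auto. lra.
Qed.

Lemma sig_le al n s t : frac (al * INR t) <= frac (al * INR s) -> (sos_perm al n t <= sos_perm al n s)%nat.
Proof.
  intros Hle. unfold sos_perm, cardn. apply filt_le.
  intros x _. destruct Rle_dec; destruct Rle_dec; auto; lra.
Qed.

Lemma sig_inj al n : irrational al -> forall s t, (1 <= s <= n)%nat -> (1 <= t <= n)%nat ->
  sos_perm al n s = sos_perm al n t -> s = t.
Proof.
  intros Hirr s t Hs Ht He. destruct (Nat.eq_dec s t); auto. exfalso.
  pose proof (frac_inj al Hirr s t n0).
  destruct (Rlt_le_dec (frac (al * INR s)) (frac (al * INR t))).
  - pose proof (sig_lt al n s t Hs Ht r). lia.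
  - assert (frac (al * INR t) < frac (al * INR s)) by lra.
    pose proof (sig_lt al n t s Ht Hs H0). lia.
Qed.

Lemma sig_perm al n : irrational al ->
  Permutation (map (sos_perm al n) (seq 1 n)) (seq 1 n).
Proof.
  intros Hirr. apply NoDup_Permutation_bis.
  - apply NoDup_map_NoDup_ForallPairs; [|apply seq_NoDup].
    intros x y Hx Hy. apply in_seq in Hx. apply in_seq in Hy. apply sig_inj; auto; lia.
  - rewrite length_map. lia.
  - intros z Hz. apply in_map_iff in Hz. destruct Hz as [s [<- Hs]]. apply in_seq in Hs.
    apply in_seq. pose proof (sig_range al n s). lia.
Qed.

Lemma sum_sig al n F : irrational al ->
  sumR (seq 1 n) F = sumR (seq 1 n) (fun s => F (sos_perm al n s)).
Proof.
  intros Hirr. transitivity (sumR (map (sos_perm al n) (seq 1 n)) F); [apply sumR_perm; symmetry; apply sig_perm; auto | apply sumR_map].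
Qed.

Lemma thresh al n k : irrational al -> (1 <= n)%nat -> (k <= n)%nat ->
  exists y, 0 <= y <= 1 /\ forall s, (1 <= s <= n)%nat ->
    (Nat.leb (sos_perm al n s) k = true <-> frac (al * INR s) < y).
Proof.
  intros Hirr Hn Hk. destruct (Nat.eq_dec k n) as [->|Hkn].
  - exists 1. split; [lra|]. intros s Hs. pose proof (sig_range al n s Hs).
    pose proof (frac_bounds (al * INR s)). split; intros; [lra|]. apply Nat.leb_le. lia.
  - assert (In (S k) (map (sos_perm al n) (seq 1 n))).
    { eapply Permutation_in. symmetry. apply sig_perm; auto. apply in_seq. lia. }
    apply in_map_iff in H. destruct H as [st [Hst Hin]]. apply in_seq in Hin.
    exists (frac (al * INR st)). pose proof (frac_bounds (al * INR st)). split; [lra|].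
    intros s Hs. rewrite Nat.leb_le. split.
    + intros Hle. destruct (Rlt_le_dec (frac (al * INR s)) (frac (al * INR st))); auto.
      pose proof (sig_le al n s st r). lia.
    + intros Hlt. pose proof (sig_lt al n s st Hs ltac:(lia) Hlt). lia.
Qed.


Lemma in_interval_b n a l t : (1 <= n)%nat ->
  in_interval n a l t = Nat.ltb ((t + (n - a mod n)) mod n) l.
Proof.
  intros Hn. assert (Hn0 : n <> 0%nat) by lia.
  pose proof (Nat.mod_upper_bound a n Hn0) as Ha0.
  assert (Hiff : in_interval n a l t = true <-> ((t + (n - a mod n)) mod n < l)%nat).
  { unfold in_interval. rewrite existsb_exists. split.
    - intros [i [Hi He]]. apply in_seq in Hi. apply Nat.eqb_eq in He.
      rewrite <- Nat.Div0.add_mod_idemp_l. rewrite <- He. rewrite Nat.Div0.add_mod_idemp_l.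
      pose proof (Nat.div_mod_eq a n).
      replace (a + i + (n - a mod n))%nat with (i + (1 + a / n) * n)%nat by nia.
      rewrite Nat.Div0.mod_add. pose proof (Nat.Div0.mod_le i n). lia.
    - intros Hd. exists ((t + (n - a mod n)) mod n). split; [apply in_seq; lia|].
      apply Nat.eqb_eq. rewrite Nat.Div0.add_mod_idemp_r.
      pose proof (Nat.div_mod_eq a n).
      replace (a + (t + (n - a mod n)))%nat with (t + (1 + a / n) * n)%nat by nia.
      rewrite Nat.Div0.mod_add. reflexivity. }
  destruct (in_interval n a l t); destruct (Nat.ltb_spec ((t + (n - a mod n)) mod n) l); auto.
  - pose proof (proj1 Hiff eq_refl). lia.
  - pose proof (proj2 Hiff H). discriminate.
Qed.

Lemma dform n x : (1 <= n)%nat -> (x <= 2 * n)%nat ->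
  (x < n /\ x mod n = x)%nat \/ (n <= x < 2 * n /\ x mod n = x - n)%nat \/ (x = 2 * n /\ x mod n = 0)%nat.
Proof.
  intros Hn Hx. assert (Hn0 : n <> 0%nat) by lia.
  destruct (Nat.lt_ge_cases x n).
  - left. split; auto. apply Nat.mod_small; auto.
  - destruct (Nat.lt_ge_cases x (2 * n)).
    + right; left. split; [lia|]. replace x with ((x - n) + 1 * n)%nat at 1 by lia.
      rewrite Nat.Div0.mod_add. apply Nat.mod_small. lia.
    + right; right. split; [lia|]. replace x with (0 + 2 * n)%nat by lia.
      rewrite Nat.Div0.mod_add. apply Nat.Div0.mod_0_l.
Qed.

Definition indle (t k : nat) : R := ind (Nat.leb t k).

Lemma interval_dec n a l : (1 <= n)%nat ->
  exists k1 k2 k3, (k1 <= n)%nat /\ (k2 <= n)%nat /\ (k3 <= n)%nat /\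
    forall t, (1 <= t <= n)%nat -> ind (in_interval n a l t) = indle t k1 + indle t k2 - indle t k3.
Proof.
  intros Hn. assert (Hn0 : n <> 0%nat) by lia.
  pose proof (Nat.mod_upper_bound a n Hn0) as Ha0.
  set (a0 := (a mod n)%nat) in *.
  assert (HD : forall t, (1 <= t <= n)%nat -> exists d, in_interval n a l t = Nat.ltb d l /\
     ((t + (n - a0) < n /\ d = t + (n - a0)) \/ (n <= t + (n - a0) < 2 * n /\ d = t + (n - a0) - n) \/
      (t + (n - a0) = 2 * n /\ d = 0))%nat).
  { intros t Ht. exists ((t + (n - a0)) mod n). split; [apply in_interval_b; auto|].
    destruct (dform n (t + (n - a0)) Hn ltac:(lia)) as [[? ?]|[[? ?]|[? ?]]]; auto. }
  Ltac fin HD := intros t Ht; destruct (HD t Ht) as [d [Hb Hd]]; rewrite Hb; unfold indle, ind;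
    destruct Hd as [[? Hd]|[[? Hd]|[? Hd]]]; subst d;
    repeat match goal with |- context [Nat.ltb ?x ?y] => destruct (Nat.ltb_spec x y) end;
    repeat match goal with |- context [Nat.leb ?x ?y] => destruct (Nat.leb_spec x y) end;
    try lra; exfalso; lia.
  destruct (Nat.eq_dec l 0) as [Hl0|Hl0].
  { exists 0%nat, 0%nat, 0%nat. do 3 (split; [lia|]). fin HD. }
  destruct (le_lt_dec n l) as [Hnl|Hnl].
  { exists n, 0%nat, 0%nat. do 3 (split; [lia|]). fin HD. }
  destruct (Nat.eq_dec a0 0) as [Ha|Ha].
  { exists (l - 1)%nat, n, (n - 1)%nat. do 3 (split; [lia|]). fin HD. }
  destruct (le_lt_dec (a0 + l) n) as [Hal|Hal].
  { exists (a0 + l - 1)%nat, 0%nat, (a0 - 1)%nat. do 3 (split; [lia|]). fin HD. }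
  { exists n, (a0 + l - 1 - n)%nat, (a0 - 1)%nat. do 3 (split; [lia|]). fin HD. }
Qed.


Lemma bool_eq_iff (b1 b2 : bool) (P : Prop) : (b1 = true <-> P) -> (b2 = true <-> P) -> b1 = b2.
Proof. destruct b1, b2; intros H1 H2; auto. - symmetry; apply H2, H1; auto. - apply H1, H2; auto. Qed.

Lemma split_sum n k f : (k <= n)%nat ->
  sumR (seq 1 n) f = sumR (seq 1 k) f + sumR (seq (1 + k) (n - k)) f.
Proof. intros H. replace n with (k + (n - k))%nat at 1 by lia. rewrite seq_app, sumR_app. reflexivity. Qed.

Lemma sum_indle n k : (k <= n)%nat -> sumR (seq 1 n) (fun t => indle t k) = INR k.
Proof.
  intros H. rewrite (split_sum n k) by auto.
  rewrite (sumR_ext (seq 1 k) _ (fun _ => 1)).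
  2:{ intros t Ht. apply in_seq in Ht. unfold indle, ind. destruct (Nat.leb_spec t k); auto; lia. }
  rewrite (sumR_ext (seq (1 + k) (n - k)) _ (fun _ => 0)).
  2:{ intros t Ht. apply in_seq in Ht. unfold indle, ind. destruct (Nat.leb_spec t k); auto; lia. }
  rewrite !sumR_const, length_seq. lra.
Qed.

Lemma Xbound al n k k' : irrational al -> (1 <= n)%nat -> (k <= n)%nat -> (k' <= n)%nat ->
  Rabs (sumR (seq 1 n) (fun s => indle s k * indle (sos_perm al n s) k') - INR k * INR k' / INR n)
  <= 2 * (4 * SA al (2 * S (Nat.log2 n))).
Proof.
  intros Hirr Hn Hk Hk'. pose proof (all_fr_nz al Hirr) as H.
  destruct (thresh al n k' Hirr Hn Hk') as [y [Hy Hth]].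
  set (fb := fun s : nat => if Rlt_dec (frac (al * INR s)) y then true else false).
  assert (Hfb : forall s, fb s = true <-> frac (al * INR s) < y).
  { intros s. unfold fb. destruct Rlt_dec; split; intros; auto; try discriminate; contradiction. }
  set (E0 := 4 * SA al (2 * S (Nat.log2 n))).
  pose proof (kron al H n k y fb Hn Hk Hy Hfb) as Kk.
  pose proof (kron al H n n y fb Hn (le_n n) Hy Hfb) as Kn. fold E0 in Kk, Kn.
  assert (Hsig : forall s, (1 <= s <= n)%nat -> indle (sos_perm al n s) k' = ind (fb s)).
  { intros s Hs. unfold indle. f_equal. eapply bool_eq_iff; [apply Hth; auto| apply Hfb]. }
  assert (HX : sumR (seq 1 n) (fun s => indle s k * indle (sos_perm al n s) k') =
               sumR (seq 1 k) (fun s => ind (fb s))).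
  { rewrite (split_sum n k) by auto.
    rewrite (sumR_ext (seq (1 + k) (n - k)) _ (fun _ => 0)).
    2:{ intros t Ht. apply in_seq in Ht. unfold indle at 1, ind at 1. destruct (Nat.leb_spec t k); [lia|]. ring. }
    rewrite sumR_const. rewrite Rmult_0_r, Rplus_0_r. apply sumR_ext.
    intros t Ht. apply in_seq in Ht. rewrite Hsig by lia. unfold indle, ind at 1.
    destruct (Nat.leb_spec t k); [ring|lia]. }
  assert (HN : sumR (seq 1 n) (fun s => ind (fb s)) = INR k').
  { rewrite <- (sum_indle n k') by auto. rewrite (sum_sig al n (fun t => indle t k')) by auto.
    apply sumR_ext. intros s Hs. apply in_seq in Hs. rewrite Hsig; auto. lia. }
  rewrite HX. rewrite HN in Kn.
  set (Sk := sumR (seq 1 k) (fun s => ind (fb s))) in *.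
  assert (Hn0 : 0 < INR n) by (apply lt_0_INR; lia).
  assert (Hkn : INR k <= INR n) by (apply le_INR; auto).
  assert (Hk0 : 0 <= INR k) by apply pos_INR.
  replace (Sk - INR k * INR k' / INR n) with ((Sk - INR k * y) + (INR k / INR n) * (INR n * y - INR k')) by (field; lra).
  eapply Rle_trans; [apply Rabs_triang|]. rewrite Rabs_mult.
  assert (Rabs (INR k / INR n) <= 1).
  { rewrite Rabs_pos_eq. apply Rmult_le_reg_r with (INR n); auto. field_simplify; lra.
    unfold Rdiv. apply Rmult_le_pos; [lra|left; apply Rinv_0_lt_compat; lra]. }
  rewrite Rabs_minus_sym in Kn.
  assert (Rabs (INR k / INR n) * Rabs (INR n * y - INR k') <= 1 * E0).
  { apply Rmult_le_compat; auto; apply Rabs_pos. }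
  lra.
Qed.

Lemma img_eq al n a l s : irrational al -> (1 <= s <= n)%nat ->
  in_image n (sos_perm al n) a l (sos_perm al n s) = in_interval n a l s.
Proof.
  intros Hirr Hs. unfold in_image. eapply bool_eq_iff; [apply existsb_exists|]. split.
  - intros Hi. exists s. split; [apply in_seq; lia|]. rewrite Hi, Nat.eqb_refl. auto.
  - intros [s' [Hs' Hb]]. apply Bool.andb_true_iff in Hb. destruct Hb as [Hi He].
    apply Nat.eqb_eq in He. apply in_seq in Hs'. apply sig_inj in He; auto; [|lia]. subst. auto.
Qed.

Lemma sum3 {A} (l : list A) f1 f2 f3 :
  sumR l (fun s => f1 s + f2 s - f3 s) = sumR l f1 + sumR l f2 - sumR l f3.
Proof. induction l; simpl; [ring|]. rewrite IHl. ring. Qed.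

Lemma sum9 {A} (l : list A) f1 f2 f3 g1 g2 g3 :
  sumR l (fun s => (f1 s + f2 s - f3 s) * (g1 s + g2 s - g3 s)) =
  sumR l (fun s => f1 s * g1 s) + sumR l (fun s => f1 s * g2 s) - sumR l (fun s => f1 s * g3 s)
  + sumR l (fun s => f2 s * g1 s) + sumR l (fun s => f2 s * g2 s) - sumR l (fun s => f2 s * g3 s)
  - sumR l (fun s => f3 s * g1 s) - sumR l (fun s => f3 s * g2 s) + sumR l (fun s => f3 s * g3 s).
Proof. induction l; simpl; [ring|]. rewrite IHl. ring. Qed.

Lemma ind_and b1 b2 : ind (b1 && b2) = ind b1 * ind b2.
Proof. destruct b1, b2; unfold ind; simpl; ring. Qed.

Lemma abs_bd x e : Rabs x <= e -> - e <= x <= e.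
Proof. intros H. pose proof (Rle_abs x). pose proof (Rle_abs (- x)). rewrite Rabs_Ropp in H1. lra. Qed.

Lemma disc_bound al n a l b m : irrational al -> (1 <= n)%nat ->
  discr n (in_image n (sos_perm al n) a l) (in_interval n b m) <= 18 * (4 * SA al (2 * S (Nat.log2 n))).
Proof.
  intros Hirr Hn.
  destruct (interval_dec n a l Hn) as [k1 [k2 [k3 [H1 [H2 [H3 HI]]]]]].
  destruct (interval_dec n b m Hn) as [j1 [j2 [j3 [G1 [G2 [G3 HJ]]]]]].
  unfold discr. rewrite !cardn_sum.
  rewrite (sum_sig al n (fun t => ind (in_image n (sos_perm al n) a l t && in_interval n b m t))) by auto.
  rewrite (sum_sig al n (fun t => ind (in_image n (sos_perm al n) a l t))) by auto.
  rewrite (sumR_ext (seq 1 n) (fun s => ind (in_image n (sos_perm al n) a l (sos_perm al n s) && in_interval n b m (sos_perm al n s)))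
     (fun s => (indle s k1 + indle s k2 - indle s k3) * (indle (sos_perm al n s) j1 + indle (sos_perm al n s) j2 - indle (sos_perm al n s) j3))).
  2:{ intros s Hs. apply in_seq in Hs. rewrite ind_and. rewrite img_eq by (auto; lia).
      rewrite HI by lia. rewrite HJ; auto. apply sig_range. lia. }
  rewrite (sumR_ext (seq 1 n) (fun s => ind (in_image n (sos_perm al n) a l (sos_perm al n s)))
     (fun s => indle s k1 + indle s k2 - indle s k3)).
  2:{ intros s Hs. apply in_seq in Hs. rewrite img_eq by (auto; lia). apply HI. lia. }
  rewrite (sumR_ext (seq 1 n) (fun t => ind (in_interval n b m t))
     (fun t => indle t j1 + indle t j2 - indle t j3)).
  2:{ intros s Hs. apply in_seq in Hs. apply HJ. lia. }
  rewrite sum9, !sum3, !sum_indle by auto.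
  pose proof (abs_bd _ _ (Xbound al n k1 j1 Hirr Hn H1 G1)).
  pose proof (abs_bd _ _ (Xbound al n k1 j2 Hirr Hn H1 G2)).
  pose proof (abs_bd _ _ (Xbound al n k1 j3 Hirr Hn H1 G3)).
  pose proof (abs_bd _ _ (Xbound al n k2 j1 Hirr Hn H2 G1)).
  pose proof (abs_bd _ _ (Xbound al n k2 j2 Hirr Hn H2 G2)).
  pose proof (abs_bd _ _ (Xbound al n k2 j3 Hirr Hn H2 G3)).
  pose proof (abs_bd _ _ (Xbound al n k3 j1 Hirr Hn H3 G1)).
  pose proof (abs_bd _ _ (Xbound al n k3 j2 Hirr Hn H3 G2)).
  pose proof (abs_bd _ _ (Xbound al n k3 j3 Hirr Hn H3 G3)).
  assert (Hn0 : INR n <> 0) by (apply not_0_INR; lia).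
  set (X := fun k j => sumR (seq 1 n) (fun s => indle s k * indle (sos_perm al n s) j)) in *.
  change (sumR (seq 1 n) (fun s => indle s k1 * indle (sos_perm al n s) j1)) with (X k1 j1).
  change (sumR (seq 1 n) (fun s => indle s k1 * indle (sos_perm al n s) j2)) with (X k1 j2).
  change (sumR (seq 1 n) (fun s => indle s k1 * indle (sos_perm al n s) j3)) with (X k1 j3).
  change (sumR (seq 1 n) (fun s => indle s k2 * indle (sos_perm al n s) j1)) with (X k2 j1).
  change (sumR (seq 1 n) (fun s => indle s k2 * indle (sos_perm al n s) j2)) with (X k2 j2).
  change (sumR (seq 1 n) (fun s => indle s k2 * indle (sos_perm al n s) j3)) with (X k2 j3).
  change (sumR (seq 1 n) (fun s => indle s k3 * indle (sos_perm al n s) j1)) with (X k3 j1).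
  change (sumR (seq 1 n) (fun s => indle s k3 * indle (sos_perm al n s) j2)) with (X k3 j2).
  change (sumR (seq 1 n) (fun s => indle s k3 * indle (sos_perm al n s) j3)) with (X k3 j3).
  set (d := fun k j => X k j - INR k * INR j / INR n) in *.
  match goal with |- Rabs ?e <= _ =>
    replace e with (d k1 j1 + d k1 j2 - d k1 j3 + d k2 j1 + d k2 j2 - d k2 j3
                    - d k3 j1 - d k3 j2 + d k3 j3) by (unfold d; field; auto) end.
  apply Rabs_le. unfold d, X. lra.
Qed.


Theorem mainTheorem13 (alpha : R) :
  irrational alpha -> pq_bounded_in_average alpha ->
  exists (C : R) (N : nat), forall n : nat, (N <= n)%nat ->
    disc_le n (sos_perm alpha n) (C * ln (INR n)).
Proof.
  intros Hirr [B HB]. pose proof (all_fr_nz alpha Hirr) as H.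
  assert (HB1 : 1 <= B).
  { pose proof (HB 1%nat (le_n 1)). pose proof (aq_ge1 alpha 0 (H 0%nat)).
    apply IZR_le in H1. simpl in H0. unfold aq in H1. lra. }
  assert (Hl2 : 0 < ln 2) by (rewrite <- ln_1; apply ln_increasing; lra).
  exists (288 * B / ln 2), 2%nat. intros n Hn a l b m.
  eapply Rle_trans; [apply disc_bound; auto; lia|].
  pose proof (Nat.log2_spec n ltac:(lia)) as [Hlo Hhi].
  set (L := Nat.log2 n) in *.
  assert (HL1 : (1 <= L)%nat).
  { destruct L; [simpl in Hhi; lia|lia]. }
  assert (HSA : SA alpha (2 * S L) <= B * INR (2 * S L)) by (apply HB; lia).
  assert (HI : INR (2 * S L) <= 4 * INR L).
  { apply le_INR in HL1. rewrite mult_INR, (S_INR L). replace (INR 2) with 2 by (simpl; ring). change (INR 1) with 1 in HL1. lra. }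
  assert (Hln : INR L * ln 2 <= ln (INR n)).
  { rewrite <- ln_pow by lra.
    assert (lnle : forall x y, 0 < x -> x <= y -> ln x <= ln y).
    { intros x y Hx [Hxy|<-]; [left; apply ln_increasing; auto|lra]. }
    apply lnle.
    - apply pow_lt; lra.
    - apply le_INR in Hlo. rewrite pow_INR in Hlo.
      replace (INR 2) with 2 in Hlo by (simpl; ring). exact Hlo. }
  assert (HL : INR L <= ln (INR n) / ln 2).
  { apply Rmult_le_reg_r with (ln 2); auto. field_simplify; lra. }
  replace (288 * B / ln 2 * ln (INR n)) with (288 * B * (ln (INR n) / ln 2)) by (field; lra).
  assert (B * INR (2 * S L) <= B * (4 * INR L)) by (apply Rmult_le_compat_l; lra).
  assert (B * INR L <= B * (ln (INR n) / ln 2)) by (apply Rmult_le_compat_l; lra).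
  lra.
Qed.
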